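(* Let $\mathfrak{n}$ be the real $7$-dimensional Lie algebra with basis $e_1,\dots,e_7$ whose nonzero brackets (up to antisymmetry) are $[e_1,e_2]=e_3$, $[e_1,e_3]=e_4$, $[e_1,e_4]=e_6$, $[e_1,e_5]=e_7$, $[e_1,e_6]=e_7$, $[e_2,e_3]=e_5$, $[e_2,e_4]=e_7$. Then $\mathfrak{n}$ is an Einstein nilradical.
   Context: A real nilpotent Lie algebra $\mathfrak{n}$ is called an Einstein nilradical if it admits an inner product such that the left-invariant Riemannian metric it defines on the simply connected nilpotent Lie group with Lie algebra $\mathfrak{n}$ is a nilsoliton, i.e. its Ricci operator satisfies $\mathrm{Ric}=c\,\mathrm{Id}+D$ for some $c\in\mathbb{R}$ and some derivation $D$ of $\mathfrak{n}$. Brackets of basis elements not listed are zero. *)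

(* Defs.v *)
From HB Require Import structures.
From mathcomp Require Import all_boot all_order all_algebra.
From mathcomp Require Import reals.
Set Implicit Arguments. Unset Strict Implicit. Unset Printing Implicit Defensive.
Import Order.TTheory GRing.Theory Num.Theory.
Local Open Scope ring_scope.

Section LieMetric.
Variables (R : realType) (n : nat).

Definition ev (k : 'I_n) : 'rV[R]_n := delta_mx 0 k.

Definition brkt (c : 'I_n -> 'I_n -> 'rV[R]_n) (x y : 'rV[R]_n) : 'rV[R]_n :=
  \sum_(i < n) \sum_(j < n) (x 0 i * y 0 j) *: c i j.

Definition is_Lie (c : 'I_n -> 'I_n -> 'rV[R]_n) : Prop :=
  (forall x, brkt c x x = 0) /\
  (forall x y z, brkt c x (brkt c y z) + brkt c y (brkt c z x)
                 + brkt c z (brkt c x y) = 0).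

Definition is_nilpotent (c : 'I_n -> 'I_n -> 'rV[R]_n) : Prop :=
  exists k : nat, forall (x : 'rV[R]_n) (xs : seq 'rV[R]_n),
    size xs = k -> foldr (brkt c) x xs = 0.

Definition ip (G : 'M[R]_n) (x y : 'rV[R]_n) : R := (x *m G *m y^T) 0 0.

Definition is_inner_product (G : 'M[R]_n) : Prop :=
  G^T = G /\ forall x : 'rV[R]_n, x != 0 -> 0 < ip G x x.

(* Levi-Civita connection of the left-invariant metric (Koszul formula):
   2 <nabla_X Y, Z> = <[X,Y],Z> - <[Y,Z],X> + <[Z,X],Y>. *)
Definition nabla (c : 'I_n -> 'I_n -> 'rV[R]_n) (G : 'M[R]_n)
    (x y : 'rV[R]_n) : 'rV[R]_n :=
  (\row_k ((ip G (brkt c x y) (ev k) - ip G (brkt c y (ev k)) x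
            + ip G (brkt c (ev k) x) y) / 2)) *m invmx G.

Definition curv c G (x y z : 'rV[R]_n) : 'rV[R]_n :=
  nabla c G x (nabla c G y z) - nabla c G y (nabla c G x z)
  - nabla c G (brkt c x y) z.

Definition ric c G (y z : 'rV[R]_n) : R :=
  \sum_(k < n) (curv c G (ev k) y z) 0 k.

(* Ricci operator: <Ric Y, Z> = ric(Y,Z) *)
Definition ricop c G (y : 'rV[R]_n) : 'rV[R]_n :=
  (\row_k ric c G y (ev k)) *m invmx G.

Definition is_derivation c (D : 'M[R]_n) : Prop :=
  forall x y, brkt c x y *m D = brkt c (x *m D) y + brkt c x (y *m D).

Definition is_nilsoliton c (G : 'M[R]_n) : Prop :=
  exists (c0 : R) (D : 'M[R]_n), is_derivation c D /\
    forall x, ricop c G x = c0 *: x + x *m D.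

Definition einstein_nilradical c : Prop :=
  is_Lie c /\ is_nilpotent c /\
  exists G : 'M[R]_n, is_inner_product G /\ is_nilsoliton c G.

End LieMetric.

(* The 7-dimensional algebra; e_1..e_7 are indices 0..6. *)
Definition e7 (R : realType) (k : nat) : 'rV[R]_7 := delta_mx 0 (@inord 6 k).

Definition n7 (R : realType) (i j : 'I_7) : 'rV[R]_7 :=
  match nat_of_ord i, nat_of_ord j with
  | 0, 1 => e7 R 2 | 1, 0 => - e7 R 2
  | 0, 2 => e7 R 3 | 2, 0 => - e7 R 3
  | 0, 3 => e7 R 5 | 3, 0 => - e7 R 5
  | 0, 4 => e7 R 6 | 4, 0 => - e7 R 6
  | 0, 5 => e7 R 6 | 5, 0 => - e7 R 6
  | 1, 2 => e7 R 4 | 2, 1 => - e7 R 4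
  | 1, 3 => e7 R 6 | 3, 1 => - e7 R 6
  | _, _ => 0
  end.

(* Main.v *)
Require Import Defs.
From Stdlib Require Import ZArith QArith FunctionalExtensionality.
From HB Require Import structures.
From mathcomp Require Import all_boot all_order all_algebra.
From mathcomp Require Import reals.
From mathcomp Require Import ssrZ.
From mathcomp Require Import ring lra.
Import ssrZ.Instances.
Set Implicit Arguments. Unset Strict Implicit. Unset Printing Implicit Defensive.
Import Order.TTheory GRing.Theory Num.Theory.


Module PartA.
Local Open Scope ring_scope.

Section Phi.
Variable R : realType.
Definition zR (z : Z) : R := (int_of_Z z)%:~R.
Definition qR (q : Q) : R := zR (Qnum q) / zR (Zpos (Qden q)).

Lemma zR_add a b : zR (Z.add a b) = zR a + zR b.
Proof. by rewrite /zR (rmorphD int_of_Z a b) intrD. Qed.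
Lemma zR_mul a b : zR (Z.mul a b) = zR a * zR b.
Proof. by rewrite /zR (rmorphM int_of_Z a b) intrM. Qed.
Lemma zR_opp a : zR (Z.opp a) = - zR a.
Proof. by rewrite /zR (rmorphN int_of_Z a) mulrNz. Qed.
Lemma zR_pos p : 0 < zR (Zpos p).
Proof. rewrite /zR /= ltr0z ltz_nat; apply/ssrnat.ltP; exact: Pos2Nat.is_pos. Qed.
Lemma zR_pos_neq0 p : zR (Zpos p) != 0.
Proof. by rewrite gt_eqF // zR_pos. Qed.

Lemma qR_add (x y : Q) : qR (Qplus x y) = qR x + qR y.
Proof.
case: x y => [xn xd] [yn yd]; rewrite /qR /Qplus /=.
have := zR_pos_neq0 xd; have := zR_pos_neq0 yd => hy hx.
rewrite zR_add !zR_mul (_ : Zpos (xd * yd) = (Z.mul (Zpos xd) (Zpos yd))) // zR_mul.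
by field; apply/andP.
Qed.
Lemma qR_mul (x y : Q) : qR (Qmult x y) = qR x * qR y.
Proof.
case: x y => [xn xd] [yn yd]; rewrite /qR /Qmult /=.
have := zR_pos_neq0 xd; have := zR_pos_neq0 yd => hy hx.
rewrite !zR_mul (_ : Zpos (xd * yd) = (Z.mul (Zpos xd) (Zpos yd))) // zR_mul.
by field; apply/andP.
Qed.
Lemma qR_opp (x : Q) : qR (Qopp x) = - qR x.
Proof. by case: x => [xn xd]; rewrite /qR /= zR_opp mulNr. Qed.
Lemma qR_eq (x y : Q) : Qeq x y -> qR x = qR y.
Proof.
case: x y => [xn xd] [yn yd]; rewrite /Qeq /qR /= => h.
have := zR_pos_neq0 xd; have := zR_pos_neq0 yd => hy hx.
have h2 := congr1 zR h; rewrite !zR_mul in h2.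
apply/eqP; rewrite eqr_div // h2 //.
Qed.
Lemma qR_red (x : Q) : qR (Qred x) = qR x.
Proof. by apply: qR_eq; apply: Qred_correct. Qed.
End Phi.

End PartA.
Import PartA.

Module PartB.

Section Gen.
Variables (T : Type) (add mul : T -> T -> T) (opp : T -> T).
Definition S7 (f : nat -> T) : T :=
  add (f 0%N) (add (f 1%N) (add (f 2%N) (add (f 3%N) (add (f 4%N) (add (f 5%N) (f 6%N)))))).
Definition sb x y := add x (opp y).
Definition Nf (cv : nat -> nat -> nat -> T) (G Gi : nat -> nat -> T) (h : T) (a b l : nat) : T :=
  S7 (fun k => mul (mul (add (sb (S7 (fun m => mul (cv a b m) (G m k)))
                               (S7 (fun m => mul (cv b k m) (G m a))))
                          (S7 (fun m => mul (cv k a m) (G m b)))) h) (Gi k l)).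
Definition Cf (cv N : nat -> nat -> nat -> T) (j i k l : nat) : T :=
  sb (sb (S7 (fun m => mul (N i k m) (N j m l))) (S7 (fun m => mul (N j k m) (N i m l))))
     (S7 (fun m => mul (cv j i m) (N m k l))).
Definition Rf (cv N : nat -> nat -> nat -> T) (i k : nat) : T := S7 (fun j => Cf cv N j i k j).
Definition ROf (cv N : nat -> nat -> nat -> T) (Gi : nat -> nat -> T) (i l : nat) : T :=
  S7 (fun k => mul (Rf cv N i k) (Gi k l)).
Definition MMf (A B : nat -> nat -> T) (i j : nat) : T := S7 (fun m => mul (A i m) (B m j)).
(* Jacobi: [e_a,[e_b,e_c]] component l *)
Definition J1 (cv : nat -> nat -> nat -> T) a b c l := S7 (fun m => mul (cv b c m) (cv a m l)).
Definition Jf cv a b c l := add (add (J1 cv a b c l) (J1 cv b c a l)) (J1 cv c a b l).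
(* derivation: [e_a,e_b] D = [e_a D, e_b] + [e_a, e_b D] *)
Definition DL (cv : nat -> nat -> nat -> T) (D : nat -> nat -> T) a b l := S7 (fun m => mul (cv a b m) (D m l)).
Definition DR (cv : nat -> nat -> nat -> T) (D : nat -> nat -> T) a b l :=
  add (S7 (fun j => mul (D a j) (cv j b l))) (S7 (fun j => mul (D b j) (cv a j l))).
End Gen.

Section Morph.
Variables (T1 T2 : Type) (add1 mul1 : T1 -> T1 -> T1) (opp1 : T1 -> T1)
  (add2 mul2 : T2 -> T2 -> T2) (opp2 : T2 -> T2) (phi : T1 -> T2).
Hypothesis hadd : forall x y, phi (add1 x y) = add2 (phi x) (phi y).
Hypothesis hmul : forall x y, phi (mul1 x y) = mul2 (phi x) (phi y).
Hypothesis hopp : forall x, phi (opp1 x) = opp2 (phi x).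
Let F3 (f : nat -> nat -> nat -> T1) := fun a b c => phi (f a b c).
Let F2 (f : nat -> nat -> T1) := fun a b => phi (f a b).
Lemma S7_morph f : phi (S7 add1 f) = S7 add2 (fun n => phi (f n)).
Proof. by rewrite /S7 !hadd. Qed.
Lemma S7_ext (T : Type) (ad : T -> T -> T) f g : (forall n, f n = g n) -> S7 ad f = S7 ad g.
Proof. by move=> h; rewrite /S7 !h. Qed.
Lemma sb_morph x y : phi (sb add1 opp1 x y) = sb add2 opp2 (phi x) (phi y).
Proof. by rewrite /sb hadd hopp. Qed.
Lemma Nf_morph cv G Gi h a b l :
  phi (Nf add1 mul1 opp1 cv G Gi h a b l) = Nf add2 mul2 opp2 (F3 cv) (F2 G) (F2 Gi) (phi h) a b l.
Proof.
rewrite /Nf S7_morph; apply: S7_ext => k.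
by rewrite !hmul hadd sb_morph !S7_morph /F3 /F2; congr (mul2 (mul2 (add2 (sb _ _ _ _) _) _) _);
  apply: S7_ext => m; rewrite hmul.
Qed.
Lemma Cf_morph cv N j i k l :
  phi (Cf add1 mul1 opp1 cv N j i k l) = Cf add2 mul2 opp2 (F3 cv) (F3 N) j i k l.
Proof.
rewrite /Cf !sb_morph !S7_morph /F3; congr (sb _ _ (sb _ _ _ _) _); apply: S7_ext => m; by rewrite hmul.
Qed.
Lemma ROf_morph cv N Gi i l :
  phi (ROf add1 mul1 opp1 cv N Gi i l) = ROf add2 mul2 opp2 (F3 cv) (F3 N) (F2 Gi) i l.
Proof.
rewrite /ROf S7_morph; apply: S7_ext => k; rewrite hmul /Rf S7_morph; congr (mul2 _ _).
by apply: S7_ext => j; rewrite Cf_morph.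
Qed.
Lemma MMf_morph A B i j : phi (MMf add1 mul1 A B i j) = MMf add2 mul2 (F2 A) (F2 B) i j.
Proof. by rewrite /MMf S7_morph; apply: S7_ext => m; rewrite hmul. Qed.
Lemma Jf_morph cv a b c l : phi (Jf add1 mul1 cv a b c l) = Jf add2 mul2 (F3 cv) a b c l.
Proof. by rewrite /Jf /J1 /S7 /F3 !hadd !hmul. Qed.
Lemma DL_morph cv D a b l : phi (DL add1 mul1 cv D a b l) = DL add2 mul2 (F3 cv) (F2 D) a b l.
Proof. by rewrite /DL S7_morph; apply: S7_ext => m; rewrite hmul. Qed.
Lemma DR_morph cv D a b l : phi (DR add1 mul1 cv D a b l) = DR add2 mul2 (F3 cv) (F2 D) a b l.
Proof. by rewrite /DR hadd !S7_morph; congr (add2 _ _); apply: S7_ext => m; rewrite hmul. Qed.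
End Morph.

End PartB.
Import PartB.

Module PartC.
Local Open Scope ring_scope.

Section Struct.
Variables (R : realType) (n : nat) (c : 'I_n -> 'I_n -> 'rV[R]_n) (G : 'M[R]_n).

Lemma lin_expand (F : 'rV[R]_n -> 'rV[R]_n) :
  (forall a x y, F (a *: x + y) = a *: F x + F y) ->
  forall x, F x = \sum_i x 0 i *: F (ev R i).
Proof.
move=> h x.
have F0 : F 0 = 0.
  have e := h 1 0 0; rewrite !scale1r addr0 in e.
  by apply: (addrI (F 0)); rewrite addr0 -e.
have FD : forall u v, F (u + v) = F u + F v by move=> u v; have := h 1 u v; rewrite !scale1r.
have FZ : forall a u, F (a *: u) = a *: F u by move=> a u; rewrite -(addr0 (a *: u)) h F0 addr0.
rewrite {1}(row_sum_delta x) (big_morph F FD F0); apply: eq_bigr => i _.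
by rewrite FZ.
Qed.

Lemma lin_expand_s (F : 'rV[R]_n -> R) :
  (forall a x y, F (a *: x + y) = a * F x + F y) ->
  forall x, F x = \sum_i x 0 i * F (ev R i).
Proof.
move=> h x.
have F0 : F 0 = 0.
  have e := h 1 0 0; rewrite !scale1r addr0 mul1r in e.
  by apply: (addrI (F 0)); rewrite addr0 -e.
have FD : forall u v, F (u + v) = F u + F v by move=> u v; have := h 1 u v; rewrite scale1r mul1r.
have FZ : forall a u, F (a *: u) = a * F u by move=> a u; rewrite -(addr0 (a *: u)) h F0 addr0.
rewrite {1}(row_sum_delta x) (big_morph F FD F0); apply: eq_bigr => i _.
by rewrite FZ.
Qed.

Lemma brktDl a x y z : brkt c (a *: x + y) z = a *: brkt c x z + brkt c y z.
Proof.
rewrite /brkt scaler_sumr -big_split; apply: eq_bigr => i _.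
rewrite scaler_sumr -big_split; apply: eq_bigr => j _.
rewrite !mxE scalerA /= -scalerDl; congr (_ *: _); ring.
Qed.
Lemma brktDr a x y z : brkt c z (a *: x + y) = a *: brkt c z x + brkt c z y.
Proof.
rewrite /brkt scaler_sumr -big_split; apply: eq_bigr => i _.
rewrite scaler_sumr -big_split; apply: eq_bigr => j _.
rewrite !mxE scalerA /= -scalerDl; congr (_ *: _); ring.
Qed.
Lemma brkt_ev i j : brkt c (ev R i) (ev R j) = c i j.
Proof.
rewrite /brkt (bigD1 i) //=.
rewrite [X in _ + X]big1; last first.
  by move=> k /negbTE hk; apply: big1 => l _; rewrite /ev mxE hk andbF mul0r scale0r.
rewrite addr0 (bigD1 j) //=.
rewrite [X in _ + X]big1; last first.
  by move=> k /negbTE hk; rewrite /ev !mxE hk andbF mulr0 scale0r.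
by rewrite /ev !mxE !eqxx mulr1 scale1r addr0.
Qed.

Lemma ipDl a x y z : ip G (a *: x + y) z = a * ip G x z + ip G y z.
Proof. by rewrite /ip !mulmxDl -!scalemxAl !mxE. Qed.
Lemma ipDr a x y z : ip G z (a *: x + y) = a * ip G z x + ip G z y.
Proof. by rewrite /ip linearD linearZ /= mulmxDr -scalemxAr !mxE. Qed.
Lemma ip_ev u k : ip G u (ev R k) = \sum_m u 0 m * G m k.
Proof. by rewrite /ip /ev trmx_delta -colE !mxE. Qed.

Lemma nablaDl a x y z : nabla c G (a *: x + y) z = a *: nabla c G x z + nabla c G y z.
Proof.
rewrite /nabla scalemxAl -mulmxDl; congr (_ *m _); apply/rowP => k; rewrite !mxE.
rewrite brktDl brktDr !ipDl ipDr; ring.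
Qed.
Lemma nablaDr a x y z : nabla c G z (a *: x + y) = a *: nabla c G z x + nabla c G z y.
Proof.
rewrite /nabla scalemxAl -mulmxDl; congr (_ *m _); apply/rowP => k; rewrite !mxE.
rewrite brktDr brktDl !ipDl ipDr; ring.
Qed.
Lemma vec_lin (a : R) (A A' B B' C C' : 'rV[R]_n) :
  (a *: A + A') - (a *: B + B') - (a *: C + C') = a *: (A - B - C) + (A' - B' - C').
Proof. apply/rowP => k; rewrite !mxE; ring. Qed.
Lemma curvDm a x y y' z : curv c G x (a *: y + y') z = a *: curv c G x y z + curv c G x y' z.
Proof. by rewrite /curv !nablaDl nablaDr brktDr nablaDl vec_lin. Qed.
Lemma ricopD a y y' : ricop c G (a *: y + y') = a *: ricop c G y + ricop c G y'.
Proof.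
rewrite /ricop scalemxAl -mulmxDl; congr (_ *m _); apply/rowP => k; rewrite !mxE.
rewrite /ric mulr_sumr -big_split; apply: eq_bigr => j _.
by rewrite curvDm !mxE.
Qed.

End Struct.

Section Seven.
Variables (R : realType) (c : 'I_7 -> 'I_7 -> 'rV[R]_7) (G : 'M[R]_7).
Definition ei (k : nat) : 'rV[R]_7 := ev R (@inord 6 k).
Definition cvn a b m := c (inord a) (inord b) 0 (@inord 6 m).
Definition Gn a b := G (@inord 6 a) (@inord 6 b).
Definition Gin a b := invmx G (@inord 6 a) (@inord 6 b).
Definition NR a b l := nabla c G (ei a) (ei b) 0 (@inord 6 l).

Lemma sumS7 (F : 'I_7 -> R) : \sum_i F i = S7 +%R (fun k => F (inord k)).
Proof.
rewrite (eq_bigr (fun i : 'I_7 => F (inord (val i)))); last by move=> i _; rewrite inord_val.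
rewrite -(big_mkord xpredT (fun k => F (inord k))).
by rewrite !big_nat_recl // big_geq // addr0.
Qed.

Lemma entryB3 (A B C : 'rV[R]_7) l : (A - B - C) 0 l = A 0 l - B 0 l - C 0 l.
Proof. by rewrite !mxE. Qed.
Lemma entrysumZ (a : 'I_7 -> R) (V : 'I_7 -> 'rV[R]_7) l :
  (\sum_m a m *: V m) 0 l = \sum_m a m * V m 0 l.
Proof. by rewrite summxE; apply: eq_bigr => m _; rewrite mxE. Qed.

Lemma nabla_expr x y : nabla c G x y = \sum_m y 0 m *: nabla c G x (ev R m).
Proof. exact: (lin_expand (fun a u v => nablaDr c G a u v x)). Qed.
Lemma nabla_expl x y : nabla c G x y = \sum_m x 0 m *: nabla c G (ev R m) y.
Proof. exact: (lin_expand (fun a u v => nablaDl c G a u v y)). Qed.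

Lemma NR_E a b l : NR a b l = Nf +%R *%R -%R cvn Gn Gin 2^-1 a b l.
Proof.
rewrite /NR /nabla mxE sumS7 /Nf; apply: S7_ext => k.
rewrite mxE !brkt_ev !ip_ev !sumS7.
by [].
Qed.

Lemma curv_E j i k l : curv c G (ei j) (ei i) (ei k) 0 (inord l) = Cf +%R *%R -%R cvn NR j i k l.
Proof.
have e1 := nabla_expr (ei j) (nabla c G (ei i) (ei k)).
have e2 := nabla_expr (ei i) (nabla c G (ei j) (ei k)).
have e3 := nabla_expl (c (inord j) (inord i)) (ei k).
rewrite /curv brkt_ev e1 e2 e3.
rewrite entryB3 !entrysumZ !sumS7 /Cf /sb.
by [].
Qed.

Lemma ric_E i k : ric c G (ei i) (ei k) = Rf +%R *%R -%R cvn NR i k.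
Proof. by rewrite /ric sumS7 /Rf; apply: S7_ext => j; rewrite curv_E. Qed.

Lemma ricop_E i l : ricop c G (ei i) 0 (inord l) = ROf +%R *%R -%R cvn NR Gin i l.
Proof.
rewrite /ricop mxE sumS7 /ROf; apply: S7_ext => k.
by rewrite mxE ric_E.
Qed.
End Seven.

End PartC.
Import PartC.

Module PartD.

Local Open Scope nat_scope.
Definition cap (k : nat) : nat := if (k < 7)%N then k else 0%N.
Definition q0 : Q := Qmake 0 1.
Definition cvZ (a b l : nat) : Z :=
  match cap a, cap b, cap l with
  | 0, 1, 2 => Zpos 1
  | 0, 2, 3 => Zpos 1
  | 0, 3, 5 => Zpos 1
  | 0, 4, 6 => Zpos 1
  | 0, 5, 6 => Zpos 1
  | 1, 0, 2 => Zneg 1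
  | 1, 2, 4 => Zpos 1
  | 1, 3, 6 => Zpos 1
  | 2, 0, 3 => Zneg 1
  | 2, 1, 4 => Zneg 1
  | 3, 0, 5 => Zneg 1
  | 3, 1, 6 => Zneg 1
  | 4, 0, 6 => Zneg 1
  | 5, 0, 6 => Zneg 1
  | _, _, _ => Z0 end.

Definition GQ (a b : nat) : Q :=
  match cap a, cap b with
  | 0, 0 => (Qmake (1) 1)
  | 1, 1 => (Qmake (1) 1)
  | 2, 2 => (Qmake (9) 8)
  | 3, 3 => (Qmake (63) 32)
  | 4, 4 => (Qmake (63) 32)
  | 4, 5 => (Qmake (63) 64)
  | 5, 4 => (Qmake (63) 64)
  | 5, 5 => (Qmake (693) 256)
  | 6, 6 => (Qmake (567) 256)
  | _, _ => q0 end.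

Definition GiQ (a b : nat) : Q :=
  match cap a, cap b with
  | 0, 0 => (Qmake (1) 1)
  | 1, 1 => (Qmake (1) 1)
  | 2, 2 => (Qmake (8) 9)
  | 3, 3 => (Qmake (32) 63)
  | 4, 4 => (Qmake (352) 567)
  | 4, 5 => (Qmake (-128) 567)
  | 5, 4 => (Qmake (-128) 567)
  | 5, 5 => (Qmake (256) 567)
  | 6, 6 => (Qmake (256) 567)
  | _, _ => q0 end.

Definition Ntab (a b l : nat) : Q :=
  match cap a, cap b, cap l with
  | 0, 1, 2 => (Qmake (1) 2)
  | 0, 2, 1 => (Qmake (-9) 16)
  | 0, 2, 3 => (Qmake (1) 2)
  | 0, 3, 2 => (Qmake (-7) 8)
  | 0, 3, 5 => (Qmake (1) 2)
  | 0, 4, 3 => (Qmake (-1) 4)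
  | 0, 4, 6 => (Qmake (1) 2)
  | 0, 5, 3 => (Qmake (-11) 16)
  | 0, 5, 6 => (Qmake (1) 2)
  | 0, 6, 4 => (Qmake (-7) 16)
  | 0, 6, 5 => (Qmake (-1) 4)
  | 1, 0, 2 => (Qmake (-1) 2)
  | 1, 2, 0 => (Qmake (9) 16)
  | 1, 2, 4 => (Qmake (1) 2)
  | 1, 3, 6 => (Qmake (1) 2)
  | 1, 4, 2 => (Qmake (-7) 8)
  | 1, 5, 2 => (Qmake (-7) 16)
  | 1, 6, 3 => (Qmake (-9) 16)
  | 2, 0, 1 => (Qmake (-9) 16)
  | 2, 0, 3 => (Qmake (-1) 2)
  | 2, 1, 0 => (Qmake (9) 16)
  | 2, 1, 4 => (Qmake (-1) 2)
  | 2, 3, 0 => (Qmake (63) 64)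
  | 2, 4, 1 => (Qmake (63) 64)
  | 2, 5, 1 => (Qmake (63) 128)
  | 3, 0, 2 => (Qmake (-7) 8)
  | 3, 0, 5 => (Qmake (-1) 2)
  | 3, 1, 6 => (Qmake (-1) 2)
  | 3, 2, 0 => (Qmake (63) 64)
  | 3, 4, 0 => (Qmake (63) 128)
  | 3, 5, 0 => (Qmake (693) 512)
  | 3, 6, 1 => (Qmake (567) 512)
  | 4, 0, 3 => (Qmake (-1) 4)
  | 4, 0, 6 => (Qmake (-1) 2)
  | 4, 1, 2 => (Qmake (-7) 8)
  | 4, 2, 1 => (Qmake (63) 64)
  | 4, 3, 0 => (Qmake (63) 128)
  | 4, 6, 0 => (Qmake (567) 512)
  | 5, 0, 3 => (Qmake (-11) 16)
  | 5, 0, 6 => (Qmake (-1) 2)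
  | 5, 1, 2 => (Qmake (-7) 16)
  | 5, 2, 1 => (Qmake (63) 128)
  | 5, 3, 0 => (Qmake (693) 512)
  | 5, 6, 0 => (Qmake (567) 512)
  | 6, 0, 4 => (Qmake (-7) 16)
  | 6, 0, 5 => (Qmake (-1) 4)
  | 6, 1, 3 => (Qmake (-9) 16)
  | 6, 3, 1 => (Qmake (567) 512)
  | 6, 4, 0 => (Qmake (567) 512)
  | 6, 5, 0 => (Qmake (567) 512)
  | _, _, _ => q0 end.

Definition DQ (a b : nat) : Q :=
  match cap a, cap b with
  | 0, 0 => (Qmake (13) 16)
  | 1, 1 => (Qmake (13) 8)
  | 2, 2 => (Qmake (39) 16)
  | 3, 3 => (Qmake (13) 4)
  | 4, 4 => (Qmake (65) 16)
  | 5, 5 => (Qmake (65) 16)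
  | 6, 6 => (Qmake (39) 8)
  | _, _ => q0 end.

Definition cvQ (a b l : nat) : Q := inject_Z (cvZ a b l).
Definition qadd (x y : Q) : Q := Qred (Qplus x y).
Definition qmul (x y : Q) : Q := Qred (Qmult x y).
Definition c0Q : Q := Qmake (-29) 8.
Definition kd (i l : nat) : Q := if cap i == cap l then Qmake 1 1 else q0.
Definition allI (P : nat -> bool) := all P (iota 0 7).

Lemma allIP P : allI P -> forall k, (k < 7)%N -> P k.
Proof. by move=> /allP h k hk; apply: h; rewrite mem_iota. Qed.

Lemma chkN : allI (fun a => allI (fun b => allI (fun l =>
  Qeq_bool (Nf qadd qmul Qopp cvQ GQ GiQ (Qmake 1 2) a b l) (Ntab a b l)))).
Proof. vm_compute; reflexivity. Qed.
Lemma chkRO : allI (fun i => allI (fun l =>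
  Qeq_bool (ROf qadd qmul Qopp cvQ Ntab GiQ i l) (Qplus (Qmult c0Q (kd i l)) (DQ i l)))).
Proof. vm_compute; reflexivity. Qed.
Lemma chkInv : allI (fun i => allI (fun j => Qeq_bool (MMf qadd qmul GQ GiQ i j) (kd i j))).
Proof. vm_compute; reflexivity. Qed.
Lemma chkJ : allI (fun a => allI (fun b => allI (fun c => allI (fun l =>
  Qeq_bool (Jf qadd qmul cvQ a b c l) q0)))).
Proof. vm_compute; reflexivity. Qed.
Lemma chkD : allI (fun a => allI (fun b => allI (fun l =>
  Qeq_bool (DL qadd qmul cvQ DQ a b l) (DR qadd qmul cvQ DQ a b l)))).
Proof. vm_compute; reflexivity. Qed.
Definition wt (k : nat) : nat := nth 0%N [:: 1; 2; 3; 4; 5; 5; 6]%N k.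
Lemma chkW : allI (fun a => allI (fun b => allI (fun l =>
  Z.eqb (cvZ a b l) Z0 || (wt l == wt a + wt b)%N))).
Proof. vm_compute; reflexivity. Qed.
Lemma chkA : allI (fun a => allI (fun b => allI (fun l =>
  Z.eqb (cvZ a b l) (Z.opp (cvZ b a l))))).
Proof. vm_compute; reflexivity. Qed.
Lemma chkS : allI (fun a => allI (fun b => Qeq_bool (GQ a b) (GQ b a))).
Proof. vm_compute; reflexivity. Qed.
Lemma chkW2 : allI (fun a => allI (fun b => allI (fun l =>
  Z.eqb (cvZ a b l) Z0 || (wt b < wt l)))).
Proof. vm_compute; reflexivity. Qed.

End PartD.
Import PartD.

Module PartE.
Local Open Scope ring_scope.

Lemma capK k : cap (cap k) = cap k.
Proof. by rewrite /cap; case: (ltnP k 7) => h //=; rewrite h. Qed.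
Lemma val_inord k : nat_of_ord (@inord 6 k) = cap k.
Proof.
rewrite /cap; case: ifP => h; first by rewrite inordK.
by rewrite /inord /insubd insubF.
Qed.

Section Main.
Variable R : realType.

Lemma e7E k (m : 'I_7) : e7 R k 0 m = (cap k == m)%:R.
Proof. by rewrite /e7 mxE eqxx /= eq_sym -val_eqE /= val_inord. Qed.

Lemma e7NE k (m : 'I_7) : (- e7 R k) 0 m = - (cap k == m)%:R.
Proof. by rewrite mxE e7E. Qed.

Lemma n7E (i j k : 'I_7) : n7 R i j 0 k = zR R (cvZ i j k).
Proof.
case: i => [[|[|[|[|[|[|[|i]]]]]]] Hi] //;
case: j => [[|[|[|[|[|[|[|j]]]]]]] Hj] //;
case: k => [[|[|[|[|[|[|[|k]]]]]]] Hk] //;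
by rewrite /n7 /= ?e7NE ?e7E ?mxE /zR /= ?NegzE ?intrN ?mulr0n ?mulr1n ?oppr0 ?mulr0z ?mulr1z.
Qed.

Lemma qR_addq x y : qR R (qadd x y) = qR R x + qR R y.
Proof. by rewrite /qadd qR_red qR_add. Qed.
Lemma qR_mulq x y : qR R (qmul x y) = qR R x * qR R y.
Proof. by rewrite /qmul qR_red qR_mul. Qed.
Lemma qR_oppq x : qR R (Qopp x) = - qR R x.
Proof. exact: qR_opp. Qed.

Lemma qR_Z z : qR R (inject_Z z) = zR R z.
Proof. by rewrite /qR /= /zR /= mulr1z divr1. Qed.

Definition Gm : 'M[R]_7 := \matrix_(i, j) qR R (GQ i j).
Definition Gim : 'M[R]_7 := \matrix_(i, j) qR R (GiQ i j).
Definition Dm : 'M[R]_7 := \matrix_(i, j) qR R (DQ i j).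

Lemma cvn_eq : cvn (@n7 R) = fun a b m => qR R (cvQ a b m).
Proof.
apply: FunctionalExtensionality.functional_extensionality => a.
apply: FunctionalExtensionality.functional_extensionality => b.
apply: FunctionalExtensionality.functional_extensionality => m.
by rewrite /cvn n7E !val_inord /cvQ qR_Z /cvZ !capK.
Qed.
Lemma Gm_eq a b : Gm (inord a) (inord b) = qR R (GQ a b).
Proof. by rewrite mxE !val_inord /GQ !capK. Qed.
Lemma Gim_eq a b : Gim (inord a) (inord b) = qR R (GiQ a b).
Proof. by rewrite mxE !val_inord /GiQ !capK. Qed.
Lemma Dm_eq a b : Dm (inord a) (inord b) = qR R (DQ a b).
Proof. by rewrite mxE !val_inord /DQ !capK. Qed.

Lemma kdR (i j : 'I_7) : qR R (kd i j) = (i == j)%:R.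
Proof.
rewrite /kd /cap !ltn_ord.
by case: eqP => [/val_inj -> | h]; rewrite ?eqxx /qR /= /zR /= ?mulr1z ?mulr0z ?divr1 ?mul0r //;
   case: eqP => // e; case: h; rewrite e.
Qed.

Lemma inord_ord (i : 'I_7) : i = inord i.
Proof. by rewrite inord_val. Qed.

Lemma GmGim : Gm *m Gim = 1%:M.
Proof.
apply/matrixP => i j; rewrite !mxE sumS7.
rewrite -kdR.
have h := allIP (allIP chkInv (ltn_ord i)) (ltn_ord j).
rewrite -(qR_eq R (Qeq_bool_eq _ _ h)) (MMf_morph qR_addq qR_mulq) /MMf.
apply: S7_ext => k; rewrite {1}(inord_ord i) {1}(inord_ord j) Gm_eq Gim_eq.
by [].
Qed.


Lemma invGm : invmx Gm = Gim.
Proof.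
have [u _] := mulmx1_unit GmGim.
by rewrite -[invmx Gm]mulmx1 -GmGim mulmxA mulVmx // mul1mx.
Qed.

Lemma inord_cap k : @inord 6 (cap k) = inord k.
Proof. by apply: val_inj; rewrite /= !val_inord capK. Qed.
Lemma cap_lt7 k : (cap k < 7)%N.
Proof. by rewrite /cap; case: ifP. Qed.

Lemma Gn_eq : Gn Gm = fun a b => qR R (GQ a b).
Proof.
apply: functional_extensionality => a; apply: functional_extensionality => b.
exact: Gm_eq.
Qed.
Lemma Gin_eq : Gin Gm = fun a b => qR R (GiQ a b).
Proof.
apply: functional_extensionality => a; apply: functional_extensionality => b.
by rewrite /Gin invGm Gim_eq.
Qed.
Lemma half_eq : (2^-1 : R) = qR R (Qmake 1 2).
Proof. by rewrite /qR /zR /= mulr1z div1r. Qed.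

Lemma NR_eq : NR (@n7 R) Gm = fun a b l => qR R (Ntab a b l).
Proof.
apply: functional_extensionality => a; apply: functional_extensionality => b.
apply: functional_extensionality => l.
have -> : NR (@n7 R) Gm a b l = NR (@n7 R) Gm (cap a) (cap b) (cap l).
  by rewrite /NR /ei !inord_cap.
rewrite NR_E cvn_eq Gn_eq Gin_eq half_eq -(Nf_morph qR_addq qR_mulq qR_oppq).
have h := allIP (allIP (allIP chkN (cap_lt7 a)) (cap_lt7 b)) (cap_lt7 l).
by rewrite (qR_eq R (Qeq_bool_eq _ _ h)) /Ntab !capK.
Qed.

Lemma ricop_eq (i l : 'I_7) :
  ricop (@n7 R) Gm (ev R i) 0 l = qR R c0Q * (i == l)%:R + Dm i l.
Proof.
have e := ricop_E (@n7 R) Gm i l; rewrite /ei -!inord_ord in e.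
rewrite e cvn_eq NR_eq Gin_eq -(ROf_morph qR_addq qR_mulq qR_oppq).
have h := allIP (allIP chkRO (ltn_ord i)) (ltn_ord l).
rewrite (qR_eq R (Qeq_bool_eq _ _ h)) qR_add qR_mul kdR.
by rewrite mxE.
Qed.

End Main.

End PartE.
Import PartE.

Module PartF.
Local Open Scope ring_scope.

Section Fin.
Variable R : realType.
Notation c := (@n7 R).

Lemma ev_mul (a : 'I_7) (M : 'M[R]_7) l : (ev R a *m M) 0 l = M a l.
Proof. by rewrite /ev -rowE mxE. Qed.
Lemma ev_entry (a l : 'I_7) : ev R a 0 l = (a == l)%:R.
Proof. by rewrite /ev mxE eqxx eq_sym. Qed.
Lemma entryZD (a : R) (u v : 'rV[R]_7) l : (a *: u + v) 0 l = a * u 0 l + v 0 l.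
Proof. by rewrite !mxE. Qed.

Lemma ricop_full x : ricop c (Gm R) x = qR R c0Q *: x + x *m Dm R.
Proof.
have lT : forall a (u v : 'rV[R]_7), qR R c0Q *: (a *: u + v) + (a *: u + v) *m Dm R =
   a *: (qR R c0Q *: u + u *m Dm R) + (qR R c0Q *: v + v *m Dm R).
  move=> a u v; rewrite mulmxDl -scalemxAl.
  move: (u *m Dm R) (v *m Dm R) => U V; apply/rowP => k; rewrite !mxE; ring.
rewrite (lin_expand (ricopD c (Gm R)) x) (lin_expand lT x).
apply: eq_bigr => i _; congr (_ *: _); apply/rowP => l.
by rewrite ricop_eq entryZD ev_entry ev_mul.
Qed.


Lemma brkt_expl x y : brkt c x y = \sum_m x 0 m *: brkt c (ev R m) y.
Proof. exact: (lin_expand (fun a u v => brktDl c a u v y)). Qed.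
Lemma brkt_expr x y : brkt c x y = \sum_m y 0 m *: brkt c x (ev R m).
Proof. exact: (lin_expand (fun a u v => brktDr c a u v x)). Qed.

Lemma entryD (u v : 'rV[R]_7) l : (u + v) 0 l = u 0 l + v 0 l.
Proof. by rewrite !mxE. Qed.
Lemma entryD3 (u v w : 'rV[R]_7) l : (u + v + w) 0 l = u 0 l + v 0 l + w 0 l.
Proof. by rewrite !mxE. Qed.
Lemma mul_entry (u : 'rV[R]_7) (M : 'M[R]_7) l : (u *m M) 0 l = \sum_m u 0 m * M m l.
Proof. by rewrite !mxE. Qed.
Lemma lin2 (a : R) (A A' B B' : 'rV[R]_7) :
  (a *: A + A') + (a *: B + B') = a *: (A + B) + (A' + B').
Proof. apply/rowP => k; rewrite !mxE; ring. Qed.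
Lemma lin3 (a : R) (A A' B B' C C' : 'rV[R]_7) :
  (a *: A + A') + (a *: B + B') + (a *: C + C') = a *: (A + B + C) + (A' + B' + C').
Proof. apply/rowP => k; rewrite !mxE; ring. Qed.

Lemma Dn_eq : (fun a b => Dm R (@inord 6 a) (@inord 6 b)) = fun a b => qR R (DQ a b).
Proof.
apply: functional_extensionality => a; apply: functional_extensionality => b.
exact: Dm_eq.
Qed.

Lemma der_basis a b l : (a < 7)%N -> (b < 7)%N -> (l < 7)%N ->
  (brkt c (ei R a) (ei R b) *m Dm R) 0 (inord l) =
  (brkt c (ei R a *m Dm R) (ei R b) + brkt c (ei R a) (ei R b *m Dm R)) 0 (inord l).
Proof.
move=> ha hb hl.
transitivity (DL +%R *%R (cvn c) (fun a b => Dm R (@inord 6 a) (@inord 6 b)) a b l).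
  by rewrite brkt_ev mul_entry sumS7.
transitivity (DR +%R *%R (cvn c) (fun a b => Dm R (@inord 6 a) (@inord 6 b)) a b l); last first.
  rewrite (brkt_expl (ei R a *m Dm R)) (brkt_expr (ei R a) (ei R b *m Dm R)).
  rewrite entryD !entrysumZ !sumS7 /DR; congr (_ + _); apply: S7_ext => m;
  by rewrite /ei !ev_mul !brkt_ev.
rewrite cvn_eq Dn_eq -(DL_morph (qR_addq R) (qR_mulq R)) -(DR_morph (qR_addq R) (qR_mulq R)).
apply: qR_eq; apply: Qeq_bool_eq.
exact: (allIP (allIP (allIP chkD ha) hb) hl).
Qed.

Lemma is_der : is_derivation c (Dm R).
Proof.
move=> x y.
set D := Dm R.
have l1 : forall y, forall a (u v : 'rV[R]_7), brkt c (a *: u + v) y *m D = a *: (brkt c u y *m D) + brkt c v y *m D.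
  by move=> y0 a u v; rewrite brktDl mulmxDl -scalemxAl.
have l2 : forall y, forall a (u v : 'rV[R]_7), brkt c ((a *: u + v) *m D) y + brkt c (a *: u + v) (y *m D) =
   a *: (brkt c (u *m D) y + brkt c u (y *m D)) + (brkt c (v *m D) y + brkt c v (y *m D)).
  by move=> y0 a u v; rewrite mulmxDl -scalemxAl !brktDl lin2.
rewrite (lin_expand (l1 y) x) (lin_expand (l2 y) x); apply: eq_bigr => i _; congr (_ *: _).
have m1 : forall a (u v : 'rV[R]_7), brkt c (ev R i) (a *: u + v) *m D = a *: (brkt c (ev R i) u *m D) + brkt c (ev R i) v *m D.
  by move=> a u v; rewrite brktDr mulmxDl -scalemxAl.
have m2 : forall a (u v : 'rV[R]_7), brkt c (ev R i *m D) (a *: u + v) + brkt c (ev R i) ((a *: u + v) *m D) =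
   a *: (brkt c (ev R i *m D) u + brkt c (ev R i) (u *m D)) + (brkt c (ev R i *m D) v + brkt c (ev R i) (v *m D)).
  by move=> a u v; rewrite mulmxDl -scalemxAl !brktDr lin2.
rewrite (lin_expand m1 y) (lin_expand m2 y); apply: eq_bigr => j _; congr (_ *: _).
apply/rowP => l.
have := der_basis (ltn_ord i) (ltn_ord j) (ltn_ord l).
by rewrite /ei !inord_val.
Qed.


Definition Jc (x y z : 'rV[R]_7) :=
  brkt c x (brkt c y z) + brkt c y (brkt c z x) + brkt c z (brkt c x y).

Lemma Jc_lin y z a u v : Jc (a *: u + v) y z = a *: Jc u y z + Jc v y z.
Proof. by rewrite /Jc !(brktDl, brktDr) lin3. Qed.
Lemma Jc_cyc x y z : Jc x y z = Jc y z x.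
Proof. by rewrite /Jc -addrA addrC. Qed.

Lemma Jc_basis a b d l : (a < 7)%N -> (b < 7)%N -> (d < 7)%N -> (l < 7)%N ->
  Jc (ei R a) (ei R b) (ei R d) 0 (inord l) = 0.
Proof.
move=> ha hb hd hl.
transitivity (Jf +%R *%R (cvn c) a b d l).
  rewrite /Jc !brkt_ev !(brkt_expr (ei R _)) entryD3 !entrysumZ !sumS7 /Jf /J1.
  by congr (_ + _ + _); apply: S7_ext => m; rewrite /ei brkt_ev.
rewrite cvn_eq -(Jf_morph (qR_addq R) (qR_mulq R)).
rewrite (qR_eq R (Qeq_bool_eq _ _ (allIP (allIP (allIP (allIP chkJ ha) hb) hd) hl))).
by rewrite /qR /= /zR /= mulr0z mul0r.
Qed.

Lemma Jc0 x y z : Jc x y z = 0.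
Proof.
rewrite (lin_expand (Jc_lin y z) x); apply: big1 => a _.
rewrite Jc_cyc (lin_expand (Jc_lin z (ev R a)) y) big1 ?scaler0 // => b _.
rewrite Jc_cyc (lin_expand (Jc_lin (ev R a) (ev R b)) z) big1 ?scaler0 // => d _.
suff -> : Jc (ev R d) (ev R a) (ev R b) = 0 by rewrite scaler0.
apply/rowP => l; have := Jc_basis (ltn_ord d) (ltn_ord a) (ltn_ord b) (ltn_ord l).
by rewrite /ei !inord_val => ->; rewrite mxE.
Qed.

Lemma n7_anti (i j : 'I_7) : c i j = - c j i.
Proof.
apply/rowP => m; rewrite mxE !n7E -zR_opp.
have := allIP (allIP (allIP chkA (ltn_ord i)) (ltn_ord j)) (ltn_ord m).
by move/Z.eqb_eq => ->.
Qed.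

Lemma entryN (u : 'rV[R]_7) l : (- u) 0 l = - u 0 l.
Proof. by rewrite mxE. Qed.

Lemma brkt_xx x : brkt c x x = 0.
Proof.
have hS : brkt c x x = - brkt c x x.
  rewrite {1}/brkt exchange_big /= /brkt -sumrN; apply: eq_bigr => j _.
  rewrite -sumrN; apply: eq_bigr => i _.
  by rewrite n7_anti scalerN mulrC.
apply/rowP => k; have := congr1 (fun M : 'rV[R]_7 => M 0 k) hS => /=.
rewrite entryN mxE => h.
lra.
Qed.

Lemma is_Lie7 : is_Lie c.
Proof.
split; first exact: brkt_xx.
by move=> x y z; have := Jc0 x y z.
Qed.


Definition Vw (m : nat) (y : 'rV[R]_7) := forall l : 'I_7, (wt l < m)%N -> y 0 l = 0.

Lemma brkt_entry x y l : brkt c x y 0 l = \sum_i \sum_j x 0 i * y 0 j * c i j 0 l.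
Proof.
rewrite /brkt summxE; apply: eq_bigr => i _; rewrite summxE; apply: eq_bigr => j _.
by rewrite mxE.
Qed.

Lemma Vw_step m x y : Vw m y -> Vw m.+1 (brkt c x y).
Proof.
move=> hy l hl; rewrite brkt_entry; apply: big1 => i _; apply: big1 => j _.
case: (ltnP (wt j) m) => hj; first by rewrite hy // mulr0 mul0r.
rewrite n7E.
have := allIP (allIP (allIP chkW2 (ltn_ord i)) (ltn_ord j)) (ltn_ord l).
case/orP => [/Z.eqb_eq -> | h]; first by rewrite /zR /= mulr0z mulr0.
have h2 : (wt j < m)%N := leq_trans h hl.
by rewrite ltnNge hj in h2.
Qed.

Lemma fold_V x xs : Vw (size xs) (foldr (brkt c) x xs).
Proof.
elim: xs => [|y xs ih] /=; first by move=> l.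
exact: Vw_step.
Qed.

Lemma wt_lt7 (l : 'I_7) : (wt l < 7)%N.
Proof. by case: l => [[|[|[|[|[|[|[|l]]]]]]] hl]. Qed.

Lemma is_nil7 : is_nilpotent c.
Proof.
exists 7%N => x xs hs.
have h := @fold_V x xs; rewrite hs in h.
by apply/rowP => l; rewrite mxE; apply: h; apply: wt_lt7.
Qed.

Lemma ipE (u v : 'rV[R]_7) (M : 'M[R]_7) :
  (u *m M *m v^T) 0 0 = \sum_j (\sum_i u 0 i * M i j) * v 0 j.
Proof. by rewrite !mxE; apply: eq_bigr => j _; rewrite !mxE. Qed.

Lemma ipGm x : ip (Gm R) x x =
  S7 +%R (fun j => S7 +%R (fun i => x 0 (inord i) * qR R (GQ i j)) * x 0 (inord j)).
Proof.
rewrite /ip ipE sumS7; apply: S7_ext => j; rewrite sumS7; congr (_ * _).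
by apply: S7_ext => i; rewrite Gm_eq.
Qed.

Lemma ip_ge (x : 'rV[R]_7) : \sum_i x 0 i ^+ 2 <= ip (Gm R) x x.
Proof.
rewrite ipGm sumS7 /S7 /GQ /cap /= /qR /zR /=.
cbv [Pos.to_nat Pos.iter_op Nat.add].
move: (x 0 (inord 0)) (x 0 (inord 1)) (x 0 (inord 2)) (x 0 (inord 3)) (x 0 (inord 4)) (x 0 (inord 5)) (x 0 (inord 6)) => x0 x1 x2 x3 x4 x5 x6.
have h1 := sqr_ge0 x2; have h2 := sqr_ge0 x3; have h3 := sqr_ge0 (x4 + 63/62 * x5);
have h4 := sqr_ge0 x5; have h5 := sqr_ge0 x6.
nra.
Qed.


Lemma ip_pos (x : 'rV[R]_7) : x != 0 -> 0 < ip (Gm R) x x.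
Proof.
move=> hx; apply: lt_le_trans (ip_ge x).
have hge : forall i : 'I_7, true -> 0 <= x 0 i ^+ 2 by move=> i _; exact: sqr_ge0.
rewrite lt_def sumr_ge0 ?andbT //.
apply/negP => /eqP /(psumr_eq0P hge) h.
move/negP: hx; apply; apply/eqP/rowP => i; rewrite mxE.
by have := h i isT => /eqP; rewrite sqrf_eq0 => /eqP.
Qed.

Lemma Gm_sym : (Gm R)^T = Gm R.
Proof.
apply/matrixP => i j; rewrite !mxE; apply: qR_eq; apply: Qeq_bool_eq.
exact: (allIP (allIP chkS (ltn_ord j)) (ltn_ord i)).
Qed.

End Fin.


End PartF.
Import PartF.

Theorem mainTheorem11 (R : realType) : einstein_nilradical (@n7 R).
Proof.
split; first exact: is_Lie7.
split; first exact: is_nil7.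
exists (Gm R); split; first by split; [exact: Gm_sym | exact: ip_pos].
exists (qR R c0Q), (Dm R); split; [exact: is_der | exact: ricop_full].
Qed.
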